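(* Let ${}_{\mathfrak Y}\mathfrak B_{\mathfrak X}$ be a left-fibrant graph of bisets. If for all $y\in\mathfrak Y$ the maps $()^-\colon G_y\to G_{y^-}$ are injective, then for every vertex $z\in\mathfrak B$ the natural map \[B_z\to\pi_1(\mathfrak B,\lambda(z),\rho(z)),\qquad b\mapsto 1\otimes b\otimes 1,\] is injective.
   Context: Graphs and graphs of groups. A graph is a set $V\sqcup E$ with $x\mapsto x^-\in V$, $x\mapsto\bar x$, $\bar{\bar x}=x$, $x=x^-\iff x=\bar x\iff x\in V$; $x^+=(\bar x)^-$. Graph morphisms commute with these (may send edges to vertices); simplicial ones send edges to edges. A graph of groups is a connected graph with groups $G_x$ and homomorphisms $g\mapsto g^-\colon G_x\to G_{x^-}$, $g\mapsto\bar g\colon G_x\to G_{\bar x}$ ($G_x\to G_{\bar x}\to G_x$ identity, both identity for vertices); fundamental groupoid $\pi_1(\mathfrak X)$: objects $V$, generated by the $x\in\mathfrak X$ (from $x^-$ to $x^+$) and elements of the $G_v$, relations of the $G_v$, $v=1\in G_v$, $x\bar x=1$, $g^-x=xg^+$ ($g^+=(\bar g)^-$); $\pi_1(\mathfrak X,v,w)$ = morphisms from $v$ to $w$. Graphs of bisets: a graph $\mathfrak B$, graph morphisms $\lambda\colon\mathfrak B\to\mathfrak Y$, $\rho\colon\mathfrak B\to\mathfrak X$, $G_{\lambda(z)}$-$G_{\rho(z)}$-bisets $B_z$ and congruences $b\mapsto b^-\colon B_z\to B_{z^-}$, $b\mapsto\bar b\colon B_z\to B_{\bar z}$ w.r.t.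 the group homomorphisms (same axioms), $b^+=(\bar b)^-$. Fundamental biset $\pi_1(\mathfrak B,\dagger,* )$ for vertices $\dagger,*$: $\bigsqcup_{z\in V(\mathfrak B)}\pi_1(\mathfrak Y,\dagger,\lambda(z))\otimes_{G_{\lambda(z)}}B_z\otimes_{G_{\rho(z)}}\pi_1(\mathfrak X,\rho(z),* )$ modulo $q\otimes b^-\otimes p=q\lambda(z)\otimes b^+\otimes\overline{\rho(z)}p$ for edges $z$ ($\lambda(z),\overline{\rho(z)}$ groupoid morphisms, trivial if vertices). Left-fibrant: $\rho$ simplicial and for every vertex $v\in\mathfrak B$ and edge $f\in\mathfrak X$ with $f^-=\rho(v)$, the map $\bigsqcup_{e\in\rho^{-1}(f),\,e^-=v}G_{\lambda(v)}\otimes_{G_{\lambda(e)}}B_e\to B_v$, $g\otimes b\mapsto gb^-$, is an isomorphism of $G_{\lambda(v)}$-$G_f$-bisets. *)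

(* Defs.v *)
From Stdlib Require Import List Relations.
Import ListNotations.



Record group := Group {
  gcarrier :> Type;
  gmul : gcarrier -> gcarrier -> gcarrier;
  gone : gcarrier;
  ginv : gcarrier -> gcarrier;
  gmulA : forall x y z, gmul x (gmul y z) = gmul (gmul x y) z;
  gmul1l : forall x, gmul gone x = x;
  gmulVl : forall x, gmul (ginv x) x = gone
}.
Arguments gmul {g} x y.
Arguments gone {g}.
Arguments ginv {g} x.

Definition is_hom {G H : group} (f : G -> H) : Prop :=
  forall x y, f (gmul x y) = gmul (f x) (f y).

(* Graphs: a set with x |-> x^- (src) and x |-> xbar (bar), such that
   xbarbar = x, x^- is a vertex, and x = x^- <-> x = xbar <-> x vertex.  *)
Record graph := Graph {
  gcar :> Type;
  src : gcar -> gcar;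
  bar : gcar -> gcar;
  barK : forall x, bar (bar x) = x;
  src_idem : forall x, src (src x) = src x;
  src_bar : forall x, src x = x <-> bar x = x
}.
Arguments src {g} x.
Arguments bar {g} x.
Arguments barK {g} x.

Definition vertex {X : graph} (x : X) : Prop := src x = x.
Definition tgt {X : graph} (x : X) : X := src (bar x).

Fixpoint epath {X : graph} (a : X) (s : list X) (b : X) : Prop :=
  match s with
  | [] => a = b
  | x :: s' => a = src x /\ epath (tgt x) s' b
  end.
Definition connected (X : graph) : Prop :=
  forall v w : X, vertex v -> vertex w -> exists s, epath v s w.

Record gmorph (Y X : graph) := GMorph {
  gmap :> Y -> X;
  gmap_src : forall x, gmap (src x) = src (gmap x);
  gmap_bar : forall x, gmap (bar x) = bar (gmap x)
}.
Arguments gmap {Y X} g x.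
Arguments gmap_src {Y X} g x.
Arguments gmap_bar {Y X} g x.

Definition simplicial {Y X : graph} (f : gmorph Y X) : Prop :=
  forall x, ~ vertex x -> ~ vertex (f x).

Record graph_of_groups := GoG {
  ggraph :> graph;
  ggraph_conn : connected ggraph;
  ggrp : ggraph -> group;
  gdown : forall x, ggrp x -> ggrp (src x);
  gbar : forall x, ggrp x -> ggrp (bar x);
  gdown_hom : forall x, is_hom (gdown x);
  gbar_hom : forall x, is_hom (gbar x);
  gbarK : forall x g, eq_rect _ ggrp (gbar _ (gbar _ g)) x (barK x) = g;
  gdown_vertex : forall x (h : src x = x) g,
      gdown x g = eq_rect x ggrp g (src x) (eq_sym h);
  gbar_vertex : forall x (h : bar x = x) g,
      gbar x g = eq_rect x ggrp g (bar x) (eq_sym h)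
}.
Arguments ggrp {g0} x.
Arguments gdown {g0} x _.
Arguments gbar {g0} x _.

Definition gup {X : graph_of_groups} {x : X} (g : ggrp x) : ggrp (tgt x) :=
  gdown _ (gbar _ g).

(* Fundamental groupoid: words in the letters x (from x^- to x^+) and
   g in G_v (v a vertex), modulo the congruence generated by the relations. *)
Inductive letter (X : graph_of_groups) :=
  | LE : ggraph X -> letter X
  | LG : forall v : ggraph X, ggrp v -> letter X.
Arguments LE {X}.
Arguments LG {X}.

Definition word (X : graph_of_groups) := list (letter X).

Fixpoint wpath {X : graph_of_groups} (a : X) (w : word X) (b : X) : Prop :=
  match w with
  | [] => a = b
  | LE x :: w' => a = src x /\ wpath (tgt x) w' b
  | LG v _ :: w' => a = v /\ vertex v /\ wpath v w' b
  end.

Inductive grel {X : graph_of_groups} : X -> X -> word X -> word X -> Prop :=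
  | grel_mul : forall v (g h : ggrp v), vertex v ->
      grel v v [LG v g; LG v h] [LG v (gmul g h)]
  | grel_one : forall v, vertex v -> grel v v [LG v (@gone (ggrp v))] []
  | grel_vertex : forall v, vertex v -> grel v v [LE v] [LG v (@gone (ggrp v))]
  | grel_barinv : forall x, grel (src x) (src x) [LE x; LE (bar x)] []
  | grel_edge : forall x (g : ggrp x),
      grel (src x) (tgt x) [LG (src x) (gdown _ g); LE x] [LE x; LG (tgt x) (gup g)].

Inductive gstep {X : graph_of_groups} (a b : X) : word X -> word X -> Prop :=
  | gstep_ctx : forall u v c d r1 r2, wpath a u c -> grel c d r1 r2 -> wpath d v b ->
      gstep a b (u ++ r1 ++ v) (u ++ r2 ++ v).

(* equality in pi_1(X, a, b) of two words from a to b *)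
Definition gequiv {X : graph_of_groups} (a b : X) : relation (word X) :=
  clos_refl_sym_trans _ (gstep a b).

Record graph_of_bisets (Y X : graph_of_groups) := GoB {
  bgraph :> graph;
  blam : gmorph bgraph Y;
  brho : gmorph bgraph X;
  bset : bgraph -> Type;
  bact_l : forall z, ggrp (blam z) -> bset z -> bset z;
  bact_r : forall z, bset z -> ggrp (brho z) -> bset z;
  bact_l_one : forall z b, bact_l z gone b = b;
  bact_l_mul : forall z g h b, bact_l z (gmul g h) b = bact_l z g (bact_l z h b);
  bact_r_one : forall z b, bact_r z b gone = b;
  bact_r_mul : forall z g h b, bact_r z b (gmul g h) = bact_r z (bact_r z b g) h;
  bact_lr : forall z g b h, bact_r z (bact_l z g b) h = bact_l z g (bact_r z b h);
  bdown : forall z, bset z -> bset (src z);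
  bbar : forall z, bset z -> bset (bar z);
  bdown_l : forall z g b, bdown z (bact_l z g b) =
      bact_l (src z) (eq_rect _ (@ggrp Y) (gdown _ g) _ (eq_sym (gmap_src blam z)))
             (bdown z b);
  bdown_r : forall z b g, bdown z (bact_r z b g) =
      bact_r (src z) (bdown z b)
             (eq_rect _ (@ggrp X) (gdown _ g) _ (eq_sym (gmap_src brho z)));
  bbar_l : forall z g b, bbar z (bact_l z g b) =
      bact_l (bar z) (eq_rect _ (@ggrp Y) (gbar _ g) _ (eq_sym (gmap_bar blam z)))
             (bbar z b);
  bbar_r : forall z b g, bbar z (bact_r z b g) =
      bact_r (bar z) (bbar z b)
             (eq_rect _ (@ggrp X) (gbar _ g) _ (eq_sym (gmap_bar brho z)));
  bbarK : forall z b, eq_rect _ bset (bbar _ (bbar z b)) z (barK z) = b;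
  bdown_vertex : forall z (h : src z = z) b,
      bdown z b = eq_rect z bset b (src z) (eq_sym h);
  bbar_vertex : forall z (h : bar z = z) b,
      bbar z b = eq_rect z bset b (bar z) (eq_sym h)
}.
Arguments bgraph {Y X} _.
Arguments blam {Y X}.
Arguments brho {Y X}.
Arguments bset {Y X}.
Arguments bact_l {Y X g0 z}.
Arguments bact_r {Y X g0 z}.
Arguments bdown {Y X g0 z}.
Arguments bbar {Y X g0 z}.

Definition bup {Y X : graph_of_groups} {B : graph_of_bisets Y X} {z : B}
  (b : bset B z) : bset B (tgt z) := bdown (bbar b).

(* Fundamental biset pi_1(B, dag, star): triples q (x) b (x) p with
   z a vertex of B, q in pi_1(Y, dag, lam z), b in B_z, p in pi_1(X, rho z, star). *)
Record belt {Y X : graph_of_groups} (B : graph_of_bisets Y X) := BElt {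
  bz : bgraph B;
  bq : word Y;
  bb : bset B bz;
  bp : word X
}.
Arguments BElt {Y X B}.
Arguments bz {Y X B} _.
Arguments bq {Y X B} _.
Arguments bb {Y X B} _.
Arguments bp {Y X B} _.

Definition belt_wf {Y X : graph_of_groups} (B : graph_of_bisets Y X)
  (dag : Y) (star : X) (e : belt B) : Prop :=
  vertex (bz e) /\ wpath dag (bq e) (blam B (bz e)) /\ wpath (brho B (bz e)) (bp e) star.

Inductive bstep0 {Y X : graph_of_groups} (B : graph_of_bisets Y X) (dag : Y) (star : X)
  : belt B -> belt B -> Prop :=
  | bstep_q : forall z q q' b p, gequiv dag (blam B z) q q' ->
      bstep0 B dag star (BElt z q b p) (BElt z q' b p)
  | bstep_p : forall z q b p p', gequiv (brho B z) star p p' ->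
      bstep0 B dag star (BElt z q b p) (BElt z q b p')
  | bstep_tl : forall z q (g : ggrp (blam B z)) b p,
      bstep0 B dag star (BElt z (q ++ [LG (blam B z) g]) b p) (BElt z q (bact_l g b) p)
  | bstep_tr : forall z q b (g : ggrp (brho B z)) p,
      bstep0 B dag star (BElt z q (bact_r b g) p) (BElt z q b (LG (brho B z) g :: p))
  | bstep_edge : forall z q (b : bset B z) p, ~ vertex z ->
      bstep0 B dag star (BElt (src z) q (bdown b) p)
                      (BElt (tgt z) (q ++ [LE (blam B z)]) (bup b)
                            (LE (bar (brho B z)) :: p)).

Definition bstep {Y X : graph_of_groups} (B : graph_of_bisets Y X) (dag : Y) (star : X)
  (e e' : belt B) : Prop :=
  belt_wf B dag star e /\ belt_wf B dag star e' /\ bstep0 B dag star e e'.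

(* equality in pi_1(B, dag, star) *)
Definition bequiv {Y X : graph_of_groups} (B : graph_of_bisets Y X) (dag : Y) (star : X)
  : relation (belt B) := clos_refl_sym_trans _ (bstep B dag star).

(* For a vertex v of B and an edge f of X with f^- = rho v,
   the biset  |_|_{e in rho^-1(f), e^- = v} G_{lam v} (x)_{G_{lam e}} B_e
   has elements (e, g, b) modulo (e, g h^-, b) ~ (e, g, h b).            *)
Record telt {Y X : graph_of_groups} (B : graph_of_bisets Y X) (v : B) (f : X) := TElt {
  te : bgraph B;
  te_rho : brho B te = f;
  te_src : src te = v;
  tg : ggrp (blam B v);
  tb : bset B te
}.
Arguments TElt {Y X B v f}.
Arguments te {Y X B v f} _.
Arguments te_src {Y X B v f} _.
Arguments tg {Y X B v f} _.
Arguments tb {Y X B v f} _.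

Definition tdown {Y X : graph_of_groups} {B : graph_of_bisets Y X} {v : B}
  {e : B} (hs : src e = v) (h : ggrp (blam B e)) : ggrp (blam B v) :=
  eq_rect _ (@ggrp Y) (eq_rect _ (@ggrp Y) (gdown _ h) _ (eq_sym (gmap_src (blam B) e)))
          _ (f_equal (blam B) hs).

Inductive tstep {Y X : graph_of_groups} (B : graph_of_bisets Y X) (v : B) (f : X)
  : telt B v f -> telt B v f -> Prop :=
  | tstep_def : forall e he hs g h b,
      tstep B v f (TElt e he hs (gmul g (tdown hs h)) b) (TElt e he hs g (bact_l h b)).

Definition tequiv {Y X : graph_of_groups} (B : graph_of_bisets Y X) (v : B) (f : X)
  : relation (telt B v f) := clos_refl_sym_trans _ (tstep B v f).

Definition tmap {Y X : graph_of_groups} {B : graph_of_bisets Y X} {v : B} {f : X}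
  (t : telt B v f) : bset B v :=
  bact_l (tg t) (eq_rect _ (bset B) (bdown (tb t)) _ (te_src t)).

(* The map is always a well-defined morphism of G_{lam v}-G_f-bisets;
   being an isomorphism amounts to bijectivity of the induced map on the
   quotient: surjectivity, and injectivity modulo tequiv. *)
Definition left_fibrant {Y X : graph_of_groups} (B : graph_of_bisets Y X) : Prop :=
  simplicial (brho B) /\
  forall (v : B) (f : X), vertex v -> ~ vertex f -> src f = brho B v ->
    (forall b : bset B v, exists t : telt B v f, tmap t = b) /\
    (forall t t' : telt B v f, tmap t = tmap t' -> tequiv B v f t t').

(* Main.v *)
Require Import Defs.
From Stdlib Require Import List Relations Classical ClassicalEpsilon ProofIrrelevance
  FunctionalExtensionality PropExtensionality Eqdep.
Import ListNotations.

Definition dec (P : Prop) : {P} + {~ P} := excluded_middle_informative P.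

Lemma cast_irr {A} (P : A -> Type) (u v : A) (H1 H2 : u = v) (x : P u) :
  eq_rect u P x v H1 = eq_rect u P x v H2.
Proof. rewrite (proof_irrelevance _ H1 H2); reflexivity. Qed.
Lemma cast_refl {A} (P : A -> Type) (u : A) (H : u = u) (x : P u) :
  eq_rect u P x u H = x.
Proof. rewrite (proof_irrelevance _ H eq_refl); reflexivity. Qed.
Lemma cast_cast {A} (P : A -> Type) (u v w : A) (H1 : u = v) (H2 : v = w) (H3 : u = w) (x : P u) :
  eq_rect v P (eq_rect u P x v H1) w H2 = eq_rect u P x w H3.
Proof. destruct H1, H2; rewrite (proof_irrelevance _ H3 eq_refl); reflexivity. Qed.

Section Grp.
Variable G : group.
Lemma mulVr (x : G) : gmul x (ginv x) = gone.
Proof.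
  transitivity (gmul (gmul (ginv (ginv x)) (ginv x)) (gmul x (ginv x))).
  - rewrite gmulVl, gmul1l; reflexivity.
  - rewrite <- gmulA, (gmulA G (ginv x)), gmulVl, gmul1l. apply gmulVl.
Qed.
Lemma mul1r (x : G) : gmul x gone = x.
Proof. rewrite <- (gmulVl G x), gmulA, mulVr, gmul1l; reflexivity. Qed.
Lemma mul_canc_l (x y z : G) : gmul x y = gmul x z -> y = z.
Proof. intro H. rewrite <- (gmul1l G y), <- (gmul1l G z), <- (gmulVl G x), <- !gmulA, H; reflexivity. Qed.
End Grp.

Lemma hom_one (G H : group) (f : G -> H) : is_hom f -> f gone = gone.
Proof.
  intro hf. apply (mul_canc_l _ (f gone)). rewrite <- hf, gmul1l, mul1r; reflexivity.
Qed.
Lemma hom_inv (G H : group) (f : G -> H) : is_hom f -> forall x, f (ginv x) = ginv (f x).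
Proof.
  intros hf x. apply (mul_canc_l _ (f x)). rewrite <- hf, !mulVr. apply hom_one; auto.
Qed.

Section GoG.
Variable G : graph_of_groups.
Notation P := (fun x : ggraph G => gcarrier (@ggrp G x)).
Lemma cast_mul (u v : G) (H : u = v) (a b : ggrp u) :
  eq_rect u P (gmul a b) v H = gmul (eq_rect u P a v H) (eq_rect u P b v H).
Proof. destruct H; reflexivity. Qed.
Lemma cast_one (u v : G) (H : u = v) : eq_rect u P gone v H = gone.
Proof. destruct H; reflexivity. Qed.
Lemma cast_down (a b c : G) (H : a = b) (E : src a = c) (E' : src b = c) (k : ggrp a) :
  eq_rect _ P (gdown a k) _ E = eq_rect _ P (gdown b (eq_rect _ P k _ H)) _ E'.
Proof. destruct H; rewrite (proof_irrelevance _ E E'); reflexivity. Qed.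
Lemma gup_mul (x : G) (h k : ggrp x) : gup (gmul h k) = gmul (gup h) (gup k).
Proof. unfold gup. rewrite gbar_hom, gdown_hom; reflexivity. Qed.
Lemma gdown_one (x : G) : gdown x gone = gone.
Proof. apply hom_one, gdown_hom. Qed.
End GoG.

Lemma gmap_tgt (A C : graph) (F : gmorph A C) (x : A) : F (tgt x) = tgt (F x).
Proof. unfold tgt. rewrite gmap_src, gmap_bar; reflexivity. Qed.

Lemma vertex_bar (A : graph) (x : A) : vertex x -> bar x = x.
Proof. intro H. apply src_bar, H. Qed.
Lemma vertex_tgt (A : graph) (x : A) : vertex x -> tgt x = src x.
Proof. intro H. unfold tgt. rewrite vertex_bar; auto. Qed.
Lemma nvertex_bar (A : graph) (x : A) : ~ vertex x -> ~ vertex (bar x).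
Proof. intros H1 H2. apply H1. unfold vertex in *. apply src_bar. apply src_bar in H2.
  rewrite barK in H2. symmetry; exact H2. Qed.

Section YPart.
Variable Y : graph_of_groups.
Hypothesis Hinj : forall (y : ggraph Y) (g h : ggrp y), gdown y g = gdown y h -> g = h.
Notation P := (fun x : ggraph Y => gcarrier (@ggrp Y x)).

Definition inD (x : Y) (g : ggrp (src x)) : Prop := exists k, g = gdown x k.
Definition rep (x : Y) (g : ggrp (src x)) : ggrp (src x) :=
  if dec (inD x g) then gone
  else epsilon (inhabits g) (fun t => exists k, t = gmul g (gdown x k)).

Lemma inD_coset x g k : inD x (gmul g (gdown x k)) <-> inD x g.
Proof. split; intros [m Hm].
 - exists (gmul m (ginv k)). rewrite gdown_hom, (hom_inv _ _ _ (gdown_hom _ x)).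
   rewrite <- Hm, <- gmulA, mulVr, mul1r. reflexivity.
 - exists (gmul m k). rewrite gdown_hom, Hm. reflexivity.
Qed.

Lemma rep_coset x g k : rep x (gmul g (gdown x k)) = rep x g.
Proof.
  unfold rep. destruct (dec (inD x (gmul g (gdown x k)))) as [d1|n1];
  destruct (dec (inD x g)) as [d2|n2]; try reflexivity.
  - exfalso; apply n2, (inD_coset x g k), d1.
  - exfalso; apply n1, (inD_coset x g k), d2.
  - rewrite (proof_irrelevance _ (inhabits (gmul g (gdown x k))) (inhabits g)).
    f_equal. apply functional_extensionality; intro t. apply propositional_extensionality.
    split; intros [m Hm].
    + exists (gmul k m). rewrite gdown_hom, gmulA; exact Hm.
    + exists (gmul (ginv k) m). rewrite Hm, gdown_hom, (hom_inv _ _ _ (gdown_hom _ x)).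
      rewrite !gmulA, <- (gmulA _ g), mulVr, mul1r. reflexivity.
Qed.

Lemma rep_spec x g : exists k, g = gmul (rep x g) (gdown x k).
Proof.
  unfold rep. destruct (dec (inD x g)) as [[m Hm]|n].
  - exists m; rewrite gmul1l; exact Hm.
  - assert (Hex : exists t, (fun t => exists k, t = gmul g (gdown x k)) t).
    { exists g, gone. rewrite gdown_one, mul1r; reflexivity. }
    destruct (epsilon_spec (inhabits g) _ Hex) as [k Hk].
    exists (ginv k). rewrite Hk, <- gmulA, <- gdown_hom, mulVr, gdown_one, mul1r; reflexivity.
Qed.

Definition hpart x g : ggrp x := proj1_sig (constructive_indefinite_description _ (rep_spec x g)).
Lemma hpart_spec x g : g = gmul (rep x g) (gdown x (hpart x g)).
Proof. exact (proj2_sig (constructive_indefinite_description _ (rep_spec x g))). Qed.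

Lemma rep_idem x g : rep x (rep x g) = rep x g.
Proof.
  assert (Hr : rep x g = gmul g (gdown x (ginv (hpart x g)))).
  { rewrite (hpart_spec x g) at 2. rewrite <- gmulA, <- gdown_hom, mulVr, gdown_one, mul1r. reflexivity. }
  rewrite Hr at 1. apply rep_coset.
Qed.

Lemma decomp_unique x g t k : g = gmul t (gdown x k) -> rep x t = t ->
  rep x g = t /\ hpart x g = k.
Proof.
  intros Hg Ht. assert (E : rep x g = t) by (rewrite Hg, rep_coset; exact Ht).
  split; [exact E|]. apply Hinj. apply (mul_canc_l _ t).
  rewrite <- Hg, <- E. symmetry. apply hpart_spec.
Qed.

Lemma rep_one x : rep x gone = gone.
Proof. unfold rep. destruct (dec (inD x gone)) as [|n]; [reflexivity|].
  exfalso; apply n; exists gone; rewrite gdown_one; reflexivity. Qed.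

Record pe := PE { px : ggraph Y; pt : ggrp (src px) }.
Record ost := OS { ol : list pe; ov : ggraph Y; og : ggrp ov }.

Definition pushpop (L : list pe) (x : Y) (t : ggrp (src x)) (h : ggrp x) : ost :=
  match L with
  | [] => OS [PE x t] (tgt x) (gup h)
  | PE y ty :: L' =>
      match dec (t = gone /\ y = bar x) with
      | left Hc => OS L' (src y) (gmul ty (eq_rect _ P (gup h) _ (f_equal src (eq_sym (proj2 Hc)))))
      | right _ => OS (PE x t :: L) (tgt x) (gup h)
      end
  end.

Definition actY (s : ost) (l : letter Y) : ost :=
  match l with
  | LG v g => match dec (v = ov s) with
              | left H => OS (ol s) (ov s) (gmul (og s) (eq_rect _ P g _ H))
              | right _ => s end
  | LE x => match dec (vertex x) with
     | left _ => s
     | right _ => match dec (src x = ov s) with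
        | right _ => s
        | left H => let g := eq_rect _ P (og s) _ (eq_sym H) in
                    pushpop (ol s) x (rep x g) (hpart x g)
        end end
  end.

Definition actYs (s : ost) (w : word Y) : ost := fold_left actY w s.

Fixpoint okL (L : list pe) : Prop :=
  match L with
  | [] => True
  | PE x t :: L' => rep x t = t /\ okL L' /\
      match L' with PE y _ :: _ => ~ (t = gone /\ y = bar x) | [] => True end
  end.

Lemma OS_eq L v1 v2 (H : v1 = v2) g1 g2 : eq_rect _ P g1 _ H = g2 -> OS L v1 g1 = OS L v2 g2.
Proof. destruct H; simpl; intros ->; reflexivity. Qed.

Lemma pushpop_pop L' y ty x h (Hy : y = bar x) :
  pushpop (PE y ty :: L') x gone h =
  OS L' (src y) (gmul ty (eq_rect _ P (gup h) _ (f_equal src (eq_sym Hy)))).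
Proof.
  simpl. destruct (dec (gone = gone /\ y = bar x)) as [Hc|n].
  - f_equal. f_equal. apply cast_irr.
  - exfalso; apply n; auto.
Qed.

Lemma pushpop_push L x t h :
  (forall y ty L', L = PE y ty :: L' -> ~ (t = gone /\ y = bar x)) ->
  pushpop L x t h = OS (PE x t :: L) (tgt x) (gup h).
Proof.
  intro HL. destruct L as [|[y ty] L']; [reflexivity|]. simpl.
  destruct (dec (t = gone /\ y = bar x)) as [Hc|n]; [|reflexivity].
  exfalso; apply (HL y ty L' eq_refl Hc).
Qed.

Lemma actY_LG L u g v k (H : v = u) :
  actY (OS L u g) (LG v k) = OS L u (gmul g (eq_rect _ P k _ H)).
Proof. simpl. destruct (dec (v = u)) as [H'|n]; [|contradiction].
  rewrite (cast_irr _ _ _ H' H); reflexivity. Qed.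

Lemma actY_LE L x g : ~ vertex x ->
  actY (OS L (src x) g) (LE x) = pushpop L x (rep x g) (hpart x g).
Proof. intro nx. simpl. destruct (dec (vertex x)) as [|_]; [contradiction|].
  destruct (dec (src x = src x)) as [H|n]; [|contradiction].
  rewrite (cast_refl _ _ (eq_sym H)); reflexivity. Qed.

Lemma actY_LEv s x : vertex x -> actY s (LE x) = s.
Proof. intro vx. simpl. destruct (dec (vertex x)); [reflexivity|contradiction]. Qed.

Lemma actY_LE_inv s x : ov s = src x -> okL (ol s) ->
  ov (actY s (LE x)) = tgt x /\ okL (ol (actY s (LE x))).
Proof.
  intros Hv Hok. destruct (classic (vertex x)) as [vx|nx].
  - rewrite actY_LEv by exact vx. rewrite vertex_tgt by exact vx. auto.
  - destruct s as [L u g]; simpl in Hv, Hok; subst u. rewrite actY_LE by exact nx.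
    destruct (classic (exists ty L', L = PE (bar x) ty :: L' /\ rep x g = gone)) as
      [[ty [L' [-> Hr]]]|nc].
    + rewrite Hr, (pushpop_pop L' (bar x) ty x _ eq_refl). simpl. split; [reflexivity|].
      apply Hok.
    + rewrite pushpop_push.
      * simpl. split; [reflexivity|]. split; [apply rep_idem|]. split; [exact Hok|].
        destruct L as [|[y ty] L']; [exact I|]. intros [Ht Hy]. apply nc. subst y.
        exists ty, L'; auto.
      * intros y ty L' -> [Ht Hy]. apply nc. subst y. exists ty, L'; auto.
Qed.

Lemma actY_inv s l a b : wpath a [l] b -> ov s = a -> okL (ol s) ->
  ov (actY s l) = b /\ okL (ol (actY s l)).
Proof.
  intros Hw Hv Hok. destruct l as [x|v k]; simpl in Hw.
  - destruct Hw as [Ha Hb]; subst. apply actY_LE_inv; auto.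
  - destruct Hw as [Ha [Hvx Hb]]; destruct s as [L u g]; simpl in Hv, Hok; subst.
    rewrite (actY_LG L _ g _ k eq_refl). simpl; auto.
Qed.

Lemma actYs_inv w s a b : wpath a w b -> ov s = a -> okL (ol s) ->
  ov (actYs s w) = b /\ okL (ol (actYs s w)).
Proof.
  revert s a. induction w as [|l w IH]; intros s a Hw Hv Hok.
  - simpl in *; subst; auto.
  - assert (Hw1 : exists c, wpath a [l] c /\ wpath c w b).
    { destruct l as [x|v k]; simpl in Hw |- *.
      - destruct Hw as [Ha Hw]. exists (tgt x); auto.
      - destruct Hw as [Ha [Hv' Hw]]. exists v; auto. }
    destruct Hw1 as [c [Hl Hw']]. destruct (actY_inv s l a c Hl Hv Hok) as [H1 H2].
    exact (IH (actY s l) c Hw' H1 H2).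
Qed.

Lemma cast_cast_t (u v w : ggraph Y) (H1 : u = v) (H2 : v = w) (x : P u) :
  eq_rect v P (eq_rect u P x v H1) w H2 = eq_rect u P x w (eq_trans H1 H2).
Proof. exact (cast_cast P u v w H1 H2 _ x). Qed.

Lemma pushpop_LG L x t h k :
  actY (pushpop L x t h) (LG (tgt x) (gup k)) = pushpop L x t (gmul h k).
Proof.
  destruct L as [|[y ty] L'].
  - change (pushpop [] x t h) with (OS [PE x t] (tgt x) (gup h)).
    rewrite (actY_LG _ _ _ _ _ eq_refl). simpl. rewrite gup_mul. reflexivity.
  - unfold pushpop. lazy beta iota. destruct (dec (t = gone /\ y = bar x)) as [Hc|n].
    + rewrite (actY_LG _ _ _ _ _ (f_equal src (eq_sym (proj2 Hc)))).
      rewrite gup_mul, cast_mul, gmulA. reflexivity.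
    + rewrite (actY_LG _ _ _ _ _ eq_refl). simpl. rewrite gup_mul. reflexivity.
Qed.

Lemma Y_edge s x k : ov s = src x ->
  actY (actY s (LG (src x) (gdown x k))) (LE x) = actY (actY s (LE x)) (LG (tgt x) (gup k)).
Proof.
  intro Hv. destruct s as [L u g]; simpl in Hv; subst u.
  rewrite (actY_LG L (src x) g (src x) (gdown x k) eq_refl). simpl eq_rect.
  destruct (classic (vertex x)) as [vx|nx].
  - rewrite !actY_LEv by exact vx.
    rewrite (actY_LG L (src x) g (tgt x) (gup k) (vertex_tgt _ x vx)). f_equal. f_equal.
    unfold gup. assert (vb : src (bar x) = bar x) by (rewrite vertex_bar; auto).
    rewrite (gdown_vertex _ x vx), (gdown_vertex _ (bar x) vb), (gbar_vertex _ x (vertex_bar _ x vx)).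
    rewrite !cast_cast_t. apply (cast_irr P).
  - rewrite !actY_LE by exact nx.
    destruct (decomp_unique x (gmul g (gdown x k)) (rep x g) (gmul (hpart x g) k)) as [E1 E2].
    { rewrite gdown_hom, gmulA, <- hpart_spec. reflexivity. }
    { apply rep_idem. }
    rewrite E1, E2, pushpop_LG. reflexivity.
Qed.

Lemma Y_barinv s x : ov s = src x -> okL (ol s) -> actY (actY s (LE x)) (LE (bar x)) = s.
Proof.
  intros Hv Hok. destruct (classic (vertex x)) as [vx|nx].
  - rewrite !actY_LEv; auto. unfold vertex. rewrite vertex_bar; auto.
  - destruct s as [L u g]; simpl in Hv, Hok; subst u. rewrite actY_LE by exact nx.
    assert (Hs := hpart_spec x g).
    destruct (classic (exists ty L', L = PE (bar x) ty :: L' /\ rep x g = gone)) as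
      [[ty [L' [-> Hr]]]|nc].
    + rewrite Hr, (pushpop_pop L' (bar x) ty x _ eq_refl), cast_refl.
      rewrite actY_LE by (apply nvertex_bar; exact nx).
      destruct Hok as [Hty [Hok' Hadj]].
      destruct (decomp_unique (bar x) (gmul ty (gup (hpart x g))) ty (gbar x (hpart x g)) eq_refl Hty)
        as [E1 E2].
      rewrite E1, E2, pushpop_push.
      * apply (OS_eq _ _ _ (f_equal src (barK x))). unfold gup.
        rewrite (cast_down Y _ _ _ (barK x) _ eq_refl). simpl. rewrite gbarK.
        rewrite Hs at 2. rewrite Hr, gmul1l. reflexivity.
      * intros w tw L'' -> Hc. exact (Hadj Hc).
    + rewrite pushpop_push.
      * change (tgt x) with (src (bar x)). rewrite actY_LE by (apply nvertex_bar; exact nx).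
        destruct (decomp_unique (bar x) (gup (hpart x g)) gone (gbar x (hpart x g))) as [E1 E2].
        { rewrite gmul1l; reflexivity. }
        { apply rep_one. }
        rewrite E1, E2, (pushpop_pop L x (rep x g) (bar x) _ (eq_sym (barK x))).
        f_equal. unfold gup.
        rewrite (cast_down Y _ _ _ (barK x) _ eq_refl). simpl. rewrite gbarK.
        symmetry; exact Hs.
      * intros y ty L' -> [Ht Hy]. apply nc. subst y. exists ty, L'; auto.
Qed.

Lemma Y_rel s c d r1 r2 : grel c d r1 r2 -> ov s = c -> okL (ol s) -> actYs s r1 = actYs s r2.
Proof.
  intros Hr Hv Hok. destruct Hr as [v g h vv|v vv|v vv|x|x g]; cbn [actYs fold_left].
  - destruct s as [L u g0]; simpl in Hv; subst u.
    rewrite !(actY_LG _ _ _ _ _ eq_refl). simpl. rewrite gmulA. reflexivity.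
  - destruct s as [L u g0]; simpl in Hv; subst u.
    rewrite !(actY_LG _ _ _ _ _ eq_refl). simpl. rewrite mul1r. reflexivity.
  - rewrite actY_LEv by exact vv.
    destruct s as [L u g0]; simpl in Hv; subst u.
    rewrite !(actY_LG _ _ _ _ _ eq_refl). simpl. rewrite mul1r. reflexivity.
  - apply Y_barinv; auto.
  - apply Y_edge; auto.
Qed.

Lemma Y_gequiv a b w w' s : gequiv a b w w' -> ov s = a -> okL (ol s) -> actYs s w = actYs s w'.
Proof.
  intros Hq Hv Hok. induction Hq as [w w' Hst| w | w w' _ IH | w1 w2 w3 _ IH1 _ IH2].
  - destruct Hst as [u v c d r1 r2 Hu Hr Hv'].
    unfold actYs. rewrite !fold_left_app.
    destruct (actYs_inv u s a c Hu Hv Hok) as [H1 H2].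
    pose proof (Y_rel (actYs s u) c d r1 r2 Hr H1 H2) as E. unfold actYs in E. rewrite E. reflexivity.
  - reflexivity.
  - symmetry; exact IH.
  - rewrite IH1; exact IH2.
Qed.

End YPart.

Arguments PE {Y}. Arguments OS {Y}. Arguments ol {Y}. Arguments ov {Y}. Arguments og {Y}.
Arguments actY {Y}. Arguments actYs {Y}. Arguments okL {Y}. Arguments rep {Y}.
Arguments hpart {Y}. Arguments pushpop {Y}.

Lemma cast_cast_g {A} (P : A -> Type) (u v w : A) (H1 : u = v) (H2 : v = w) (x : P u) :
  eq_rect v P (eq_rect u P x v H1) w H2 = eq_rect u P x w (eq_trans H1 H2).
Proof. apply cast_cast. Qed.

Section XPart.
Variables (Y X : graph_of_groups) (B : graph_of_bisets Y X).
Hypothesis Hinj : forall (y : ggraph Y) (g h : ggrp y), gdown y g = gdown y h -> g = h.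
Hypothesis Hfib : left_fibrant B.
Notation PY := (fun x : ggraph Y => gcarrier (@ggrp Y x)).
Notation PX := (fun x : ggraph X => gcarrier (@ggrp X x)).
Notation PB := (fun x : bgraph B => bset B x).

Record tst := TS { sl : list (pe Y); sv : bgraph B; sb : bset B sv }.

Definition mk (w : ost Y) (v : B) (b : bset B v) : tst :=
  match dec (ov w = blam B v) with
  | left H => TS (ol w) v (bact_l (eq_rect _ PY (og w) _ H) b)
  | right _ => TS (ol w) v b end.

Definition resX (L : list (pe Y)) (v : B) (f : X) (t : telt B v f) : tst :=
  mk (actY (OS L (blam B v) (tg t)) (LE (blam B (te t)))) (tgt (te t)) (bup (tb t)).

Definition actX (s : tst) (l : letter X) : tst :=
  match l with
  | LG u g => match dec (u = brho B (sv s)) with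
              | left H => TS (sl s) (sv s) (bact_r (sb s) (eq_rect _ PX g _ H))
              | right _ => s end
  | LE f => match dec (vertex f) with
     | left _ => s
     | right _ => match dec (exists t : telt B (sv s) f, tmap t = sb s) with
        | left Hex => resX (sl s) (sv s) f (proj1_sig (constructive_indefinite_description _ Hex))
        | right _ => s end end
  end.

Definition actXs (s : tst) (w : word X) : tst := fold_left actX w s.

Definition okT (s : tst) : Prop := vertex (sv s) /\ okL (sl s).

Lemma TS_eq L v1 v2 (H : v1 = v2) b1 b2 : eq_rect _ PB b1 _ H = b2 -> TS L v1 b1 = TS L v2 b2.
Proof. destruct H; simpl; intros ->; reflexivity. Qed.

Lemma OS_cast (w : ost Y) z (H : ov w = z) : OS (ol w) z (eq_rect _ PY (og w) _ H) = w.
Proof. destruct w as [L u g]; simpl in *; destruct H; reflexivity. Qed.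

Lemma mk_unfold w v b (H : ov w = blam B v) :
  mk w v b = TS (ol w) v (bact_l (eq_rect _ PY (og w) _ H) b).
Proof. unfold mk. destruct (dec (ov w = blam B v)) as [H'|n]; [|contradiction].
  rewrite (cast_irr PY _ _ H' H); reflexivity. Qed.

Lemma mk_sl w v b : sl (mk w v b) = ol w.
Proof. unfold mk; destruct dec; reflexivity. Qed.
Lemma mk_sv w v b : sv (mk w v b) = v.
Proof. unfold mk; destruct dec; reflexivity. Qed.

Lemma mk_LG w v b u k (Hw : ov w = blam B v) (Hu : u = blam B v) :
  mk (actY w (LG u k)) v b = mk w v (bact_l (eq_rect _ PY k _ Hu) b).
Proof.
  destruct w as [L z g]; simpl in Hw; subst z.
  rewrite (actY_LG Y _ _ _ _ _ Hu). unfold mk; simpl ov.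
  destruct (dec (blam B v = blam B v)) as [H|n]; [|contradiction]. simpl.
  rewrite !(cast_refl PY), bact_l_mul. reflexivity.
Qed.

Lemma actX_LG L v b u k (H : u = brho B v) :
  actX (TS L v b) (LG u k) = TS L v (bact_r b (eq_rect _ PX k _ H)).
Proof. cbn [actX sv sl sb]. destruct (dec (u = brho B v)) as [H'|n]; [|contradiction].
  rewrite (cast_irr PX _ _ H' H); reflexivity. Qed.

Lemma actX_LEv s f : vertex f -> actX s (LE f) = s.
Proof. intro vf. cbn [actX]. destruct (dec (vertex f)); [reflexivity|contradiction]. Qed.

Lemma mk_r w v b u k (H : u = brho B v) :
  actX (mk w v b) (LG u k) = mk w v (bact_r b (eq_rect _ PX k _ H)).
Proof.
  unfold mk. destruct (dec (ov w = blam B v)) as [H'|n]; rewrite (actX_LG _ _ _ _ _ H).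
  - rewrite bact_lr; reflexivity.
  - reflexivity.
Qed.

Lemma castB_l (u v : B) (H : u = v) g b :
  eq_rect u PB (bact_l g b) v H =
  bact_l (eq_rect _ PY g _ (f_equal (blam B) H)) (eq_rect u PB b v H).
Proof. destruct H; reflexivity. Qed.

Lemma castB_down (a b c : B) (H : a = b) (E : src a = c) (E' : src b = c) (x : bset B a) :
  eq_rect _ PB (bdown x) _ E = eq_rect _ PB (bdown (eq_rect _ PB x _ H)) _ E'.
Proof. destruct H; rewrite (proof_irrelevance _ E E'); reflexivity. Qed.

Lemma bup_l (e : B) h b (E : tgt (blam B e) = blam B (tgt e)) :
  bup (bact_l h b) = bact_l (eq_rect _ PY (gup h) _ E) (bup b).
Proof.
  unfold bup. rewrite bbar_l, bdown_l. f_equal. unfold gup. symmetry.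
  apply (cast_down Y _ _ _ (eq_sym (gmap_bar (blam B) e))).
Qed.

Lemma bup_r (e : B) b k (E : tgt (brho B e) = brho B (tgt e)) :
  bup (bact_r b k) = bact_r (bup b) (eq_rect _ PX (gup k) _ E).
Proof.
  unfold bup. rewrite bbar_r, bdown_r. f_equal. unfold gup. symmetry.
  apply (cast_down X _ _ _ (eq_sym (gmap_bar (brho B) e))).
Qed.

Lemma WD L v f (t t' : telt B v f) : okL L -> tstep B v f t t' -> resX L v f t = resX L v f t'.
Proof.
  intros HL. destruct 1 as [e he hs g h b]. unfold resX; cbn [te tg tb]. destruct hs.
  unfold tdown. cbn [f_equal eq_rect].
  rewrite <- (actY_LG Y L (blam B (src e)) g (src (blam B e)) (gdown _ h)).
  rewrite (Y_edge Y Hinj) by (apply gmap_src).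
  destruct (actY_LE_inv Y Hinj (OS L (blam B (src e)) g) (blam B e)) as [Hw _].
  { apply gmap_src. } { exact HL. }
  rewrite (mk_LG _ _ _ _ _ (eq_trans Hw (eq_sym (gmap_tgt _ _ _ _))) (eq_sym (gmap_tgt _ _ _ _))).
  rewrite (bup_l e h b (eq_sym (gmap_tgt _ _ _ _))). reflexivity.
Qed.

Lemma WD_equiv L v f (t t' : telt B v f) : okL L -> tequiv B v f t t' -> resX L v f t = resX L v f t'.
Proof.
  intros HL Ht. induction Ht as [t t' Hs| t | t t' _ IH | t1 t2 t3 _ IH1 _ IH2].
  - apply WD; auto.
  - reflexivity.
  - symmetry; exact IH.
  - rewrite IH1; exact IH2.
Qed.

Lemma surjT v f b : vertex v -> ~ vertex f -> src f = brho B v ->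
  exists t : telt B v f, tmap t = b.
Proof. intros Hv Hf Hs. destruct Hfib as [_ HF]. apply (proj1 (HF v f Hv Hf Hs)). Qed.

Lemma resX_any L v b f (t : telt B v f) : vertex v -> ~ vertex f -> src f = brho B v ->
  okL L -> tmap t = b -> actX (TS L v b) (LE f) = resX L v f t.
Proof.
  intros Hv Hf Hs HL Ht. cbn [actX sv sl sb].
  destruct (dec (vertex f)) as [|_]; [contradiction|].
  destruct (dec (exists t : telt B v f, tmap t = b)) as [Hex|n];
    [|exfalso; apply n; exists t; exact Ht].
  destruct (constructive_indefinite_description _ Hex) as [t0 Ht0]. simpl.
  apply WD_equiv; [exact HL|]. destruct Hfib as [_ HF].
  apply (proj2 (HF v f Hv Hf Hs)). rewrite Ht0, Ht; reflexivity.
Qed.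

Lemma X_LE_inv s f : okT s -> brho B (sv s) = src f ->
  okT (actX s (LE f)) /\ brho B (sv (actX s (LE f))) = tgt f.
Proof.
  intros [Hv HL] Hs. destruct (classic (vertex f)) as [vf|nf].
  - rewrite actX_LEv by exact vf. rewrite vertex_tgt by exact vf. split; [split|]; auto.
  - destruct s as [L v b]; simpl in Hv, HL, Hs.
    destruct (surjT v f b Hv nf (eq_sym Hs)) as [t Ht].
    rewrite (resX_any L v b f t Hv nf (eq_sym Hs) HL Ht).
    destruct t as [e he hs g be]. unfold resX; cbn [te tg tb].
    rewrite mk_sv. unfold okT. rewrite mk_sv, mk_sl.
    destruct (actY_LE_inv Y Hinj (OS L (blam B v) g) (blam B e)) as [_ Hok].
    { simpl. rewrite <- hs. apply gmap_src. } { exact HL. }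
    split; [split|].
    + unfold vertex, tgt. apply src_idem.
    + exact Hok.
    + rewrite gmap_tgt, he. reflexivity.
Qed.

Lemma X_barinv s f : okT s -> ~ vertex f -> src f = brho B (sv s) ->
  actX (actX s (LE f)) (LE (bar f)) = s.
Proof.
  intros [Hv HL] nf Hs. destruct s as [L v b]; simpl in Hv, HL, Hs.
  destruct (surjT v f b Hv nf Hs) as [t Ht].
  rewrite (resX_any L v b f t Hv nf Hs HL Ht).
  destruct t as [e he hs g be]. subst b. destruct he. destruct hs.
  unfold resX; cbn [te tg tb].
  remember (actY (OS L (blam B (src e)) g) (LE (blam B e))) as w1 eqn:Ew1.
  destruct (actY_LE_inv Y Hinj (OS L (blam B (src e)) g) (blam B e)) as [Hw1 Hok1].
  { simpl. apply gmap_src. } { exact HL. }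
  rewrite <- Ew1 in Hw1, Hok1.
  assert (Hw1' : ov w1 = blam B (tgt e)) by (rewrite Hw1, gmap_tgt; reflexivity).
  rewrite (mk_unfold w1 _ _ Hw1').
  rewrite (resX_any (ol w1) (tgt e) _ (bar (brho B e))
     (TElt (bar e) (gmap_bar (brho B) e) eq_refl (eq_rect _ PY (og w1) _ Hw1') (bbar be))).
  2:{ unfold vertex, tgt. apply src_idem. }
  2:{ apply nvertex_bar. exact nf. }
  2:{ symmetry. apply gmap_tgt. }
  2:{ exact Hok1. }
  2:{ reflexivity. }
  unfold resX; cbn [te tg tb].
  rewrite OS_cast. rewrite (gmap_bar (blam B) e). subst w1.
  rewrite (Y_barinv Y Hinj) by (simpl; first [apply gmap_src | exact HL]).
  rewrite (mk_unfold (OS L (blam B (src e)) g) (tgt (bar e)) _ (eq_sym (f_equal (blam B) (f_equal src (barK e))))). simpl.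
  apply (TS_eq _ _ _ (f_equal src (barK e))). unfold tmap; simpl.
  rewrite castB_l. f_equal.
  - rewrite (cast_cast_g PY). apply (cast_refl PY).
  - unfold bup. rewrite (castB_down _ _ _ (barK e) _ eq_refl). simpl. rewrite bbarK. reflexivity.
Qed.


Lemma X_edge s f k : okT s -> src f = brho B (sv s) ->
  actX (actX s (LG (src f) (gdown f k))) (LE f) = actX (actX s (LE f)) (LG (tgt f) (gup k)).
Proof.
  intros [Hv HL] Hs. destruct s as [L v b]; simpl in Hv, HL, Hs.
  destruct (classic (vertex f)) as [vf|nf].
  - rewrite !actX_LEv by exact vf.
    rewrite (actX_LG L v b (src f) _ Hs).
    rewrite (actX_LG L v b (tgt f) _ (eq_trans (vertex_tgt _ f vf) Hs)). f_equal. f_equal.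
    unfold gup. assert (vb : src (bar f) = bar f) by (rewrite vertex_bar; auto).
    rewrite (gdown_vertex _ f vf), (gdown_vertex _ (bar f) vb), (gbar_vertex _ f (vertex_bar _ f vf)).
    rewrite !(cast_cast_g PX). apply (cast_irr PX).
  - destruct (surjT v f b Hv nf Hs) as [t Ht].
    rewrite (resX_any L v b f t Hv nf Hs HL Ht).
    destruct t as [e he hs g be]. subst b. destruct he. destruct hs.
    rewrite (actX_LG L (src e) _ (src (brho B e)) _ Hs).
    rewrite (resX_any L (src e) _ (brho B e) (TElt e eq_refl eq_refl g (bact_r be k)) Hv nf Hs HL).
    2:{ unfold tmap; simpl. rewrite bdown_r, <- bact_lr. f_equal. apply (cast_irr PX). }
    unfold resX; cbn [te tg tb].
    rewrite (mk_r _ _ _ _ _ (eq_sym (gmap_tgt _ _ (brho B) e))).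
    rewrite (bup_r e be k (eq_sym (gmap_tgt _ _ (brho B) e))). reflexivity.
Qed.

Lemma X_rel s c d r1 r2 : grel c d r1 r2 -> okT s -> brho B (sv s) = c -> actXs s r1 = actXs s r2.
Proof.
  intros Hr Hok Hv. destruct Hr as [v g h vv|v vv|v vv|x|x g]; cbn [actXs fold_left].
  - destruct s as [L u b]; simpl in Hv.
    rewrite !(actX_LG _ _ _ _ _ (eq_sym Hv)). rewrite (cast_mul X), bact_r_mul. reflexivity.
  - destruct s as [L u b]; simpl in Hv.
    rewrite !(actX_LG _ _ _ _ _ (eq_sym Hv)). rewrite (cast_one X), bact_r_one. reflexivity.
  - rewrite actX_LEv by exact vv.
    destruct s as [L u b]; simpl in Hv.
    rewrite !(actX_LG _ _ _ _ _ (eq_sym Hv)). rewrite (cast_one X), bact_r_one. reflexivity.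
  - destruct (classic (vertex x)) as [vx|nx].
    + rewrite !actX_LEv; auto. unfold vertex. rewrite vertex_bar; auto.
    + apply X_barinv; auto.
  - apply X_edge; auto.
Qed.

Lemma X_inv w s a b : wpath a w b -> okT s -> brho B (sv s) = a ->
  okT (actXs s w) /\ brho B (sv (actXs s w)) = b.
Proof.
  revert s a. induction w as [|l w IH]; intros s a Hw Hok Hv.
  - simpl in *; subst; auto.
  - destruct l as [f|v k]; simpl in Hw.
    + destruct Hw as [Ha Hw]. destruct (X_LE_inv s f Hok (eq_trans Hv Ha)) as [H1 H2].
      exact (IH _ _ Hw H1 H2).
    + destruct Hw as [Ha [Hvx Hw]]. apply (IH _ v Hw).
      * destruct s as [L u bb]; simpl in Hv. rewrite (actX_LG _ _ _ _ _ (eq_sym (eq_trans Hv Ha))).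
        exact Hok.
      * destruct s as [L u bb]; simpl in Hv. rewrite (actX_LG _ _ _ _ _ (eq_sym (eq_trans Hv Ha))).
        simpl. congruence.
Qed.

Lemma X_gequiv a b w w' s : gequiv a b w w' -> okT s -> brho B (sv s) = a -> actXs s w = actXs s w'.
Proof.
  intros Hq Hok Hv. induction Hq as [w w' Hst| w | w w' _ IH | w1 w2 w3 _ IH1 _ IH2].
  - destruct Hst as [u v c d r1 r2 Hu Hr Hv'].
    unfold actXs. rewrite !fold_left_app.
    destruct (X_inv u s a c Hu Hok Hv) as [H1 H2].
    pose proof (X_rel (actXs s u) c d r1 r2 Hr H1 H2) as E. unfold actXs in E. rewrite E. reflexivity.
  - reflexivity.
  - symmetry; exact IH.
  - rewrite IH1; exact IH2.
Qed.

Definition Phi (dag : Y) (e : belt B) : tst :=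
  actXs (mk (actYs (OS [] dag gone) (bq e)) (bz e) (bb e)) (bp e).

Lemma Phi_step dag star e e' : bstep B dag star e e' -> Phi dag e = Phi dag e'.
Proof.
  intros [[Hz1 [Hq1 Hp1]] [[Hz2 [Hq2 Hp2]] st]].
  destruct st as [z q q' b p Hq|z q b p p' Hp|z q g b p|z q b g p|z q b p nz];
    unfold Phi in *; cbn [bq bz bb bp] in *.
  - rewrite (Y_gequiv Y Hinj dag (blam B z) q q' (OS [] dag gone) Hq eq_refl I). reflexivity.
  - destruct (actYs_inv Y Hinj q (OS [] dag gone) dag _ Hq1 eq_refl I) as [_ Hok].
    apply (X_gequiv _ _ _ _ _ Hp).
    + unfold okT. rewrite mk_sv, mk_sl. auto.
    + rewrite mk_sv. reflexivity.
  - destruct (actYs_inv Y Hinj q (OS [] dag gone) dag _ Hq2 eq_refl I) as [Hw _].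
    unfold actYs at 1. rewrite fold_left_app. cbn [fold_left].
    rewrite (mk_LG _ _ _ _ _ Hw eq_refl). reflexivity.
  - cbn [actXs fold_left]. rewrite (mk_r _ _ _ _ _ eq_refl). reflexivity.
  - destruct (actYs_inv Y Hinj q (OS [] dag gone) dag _ Hq1 eq_refl I) as [Hw Hok].
    unfold actYs at 2. rewrite fold_left_app. cbn [fold_left actXs].
    fold (actYs (OS [] dag gone) q). unfold actXs. f_equal.
    set (w := actYs (OS [] dag gone) q) in *.
    assert (Hsimp : simplicial (brho B)) by apply Hfib.
    transitivity (actX (actX (mk w (src z) (bdown b)) (LE (brho B z))) (LE (bar (brho B z)))).
    + symmetry. apply X_barinv.
      * unfold okT. rewrite mk_sv, mk_sl. split; [apply src_idem | exact Hok].
      * apply Hsimp; exact nz.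
      * rewrite mk_sv. symmetry; apply gmap_src.
    + f_equal. rewrite (mk_unfold w (src z) _ Hw).
      rewrite (resX_any (ol w) (src z) _ (brho B z)
                 (TElt z eq_refl eq_refl (eq_rect _ PY (og w) _ Hw) b)).
      * unfold resX; cbn [te tg tb]. rewrite OS_cast. reflexivity.
      * apply src_idem.
      * apply Hsimp; exact nz.
      * symmetry; apply gmap_src.
      * exact Hok.
      * reflexivity.
Qed.
End XPart.

Theorem mainTheorem18 :
  forall (Y X : graph_of_groups) (B : graph_of_bisets Y X),
    left_fibrant B ->
    (forall (y : ggraph Y) (g h : ggrp y), gdown y g = gdown y h -> g = h) ->
    forall (z : bgraph B), vertex z ->
    forall b b' : bset B z,
      bequiv B (blam B z) (brho B z) (BElt z [] b []) (BElt z [] b' []) ->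
      b = b'.
Proof.
  intros Y X B Hfib Hinj z vz b b' Heq.
  assert (E : Phi Y X B (blam B z) (BElt z [] b []) = Phi Y X B (blam B z) (BElt z [] b' [])).
  { induction Heq as [e e' Hs| e | e e' _ IH | e1 e2 e3 _ IH1 _ IH2].
    - apply (Phi_step Y X B Hinj Hfib _ (brho B z)); exact Hs.
    - reflexivity.
    - symmetry; exact IH.
    - rewrite IH1; exact IH2. }
  unfold Phi in E; cbn [bq bz bb bp actXs actYs fold_left] in E.
  rewrite !(mk_unfold Y X B (OS [] (blam B z) gone) z _ eq_refl) in E. simpl in E.
  rewrite !bact_l_one in E. injection E as E. apply inj_pair2 in E. exact E.
Qed.
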